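(* Let $k\ge\ell>0$ be integers and $d=k-\ell$. Then there is a nonassociative commutative A-loop of order $2^k$ with middle nucleus of order $2^\ell$ if and only if either $d\ge 3$, or $d\ge 1$ and $\ell\ge 2$.
   Context: A loop is a set with a binary operation and a neutral element in which all left and right translations are bijections. Its inner mapping group is generated by $L_{x,y}=L_{yx}^{-1}L_yL_x$, $R_{x,y}=R_{xy}^{-1}R_yR_x$, $T_x=L_x^{-1}R_x$; an A-loop is a loop whose inner mappings are all automorphisms. The middle nucleus is $N_\mu(Q)=\{y:(xy)z=x(yz)\ \forall x,z\}$. *)

(* Defs.v *)
From mathcomp Require Import all_boot.
Set Implicit Arguments. Unset Strict Implicit. Unset Printing Implicit Defensive.

Section LoopDefs.
Variable T : finType.
Variable mul : T -> T -> T.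

Definition Lt (x : T) : T -> T := fun z => mul x z.
Definition Rt (x : T) : T -> T := fun z => mul z x.

Definition is_loop (e : T) : Prop :=
  (forall x, mul e x = x /\ mul x e = x) /\
  (forall x, bijective (Lt x)) /\ (forall x, bijective (Rt x)).

(* L_{x,y} = L_{yx}^{-1} L_y L_x ,  R_{x,y} = R_{xy}^{-1} R_y R_x ,  T_x = L_x^{-1} R_x
   (maps act on the left, composition right-to-left) *)
Definition Lxy (x y : T) : T -> T := finv (Lt (mul y x)) \o Lt y \o Lt x.
Definition Rxy (x y : T) : T -> T := finv (Rt (mul x y)) \o Rt y \o Rt x.
Definition Tx (x : T) : T -> T := finv (Lt x) \o Rt x.

Inductive inner_map : (T -> T) -> Prop :=
| inner_L x y : inner_map (Lxy x y)
| inner_R x y : inner_map (Rxy x y)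
| inner_T x : inner_map (Tx x)
| inner_id : inner_map id
| inner_comp f g : inner_map f -> inner_map g -> inner_map (f \o g)
| inner_inv f : inner_map f -> inner_map (finv f).

Definition is_automorphism (f : T -> T) : Prop :=
  bijective f /\ forall x y, f (mul x y) = mul (f x) (f y).

Definition is_Aloop (e : T) : Prop :=
  is_loop e /\ forall f, inner_map f -> is_automorphism f.

Definition is_commutative : Prop := forall x y, mul x y = mul y x.
Definition is_associative : Prop :=
  forall x y z, mul (mul x y) z = mul x (mul y z).

Definition middle_nucleus : {set T} :=
  [set y | [forall x, forall z, mul (mul x y) z == mul x (mul y z)]].

End LoopDefs.

(* Main.v *)
Require Import Defs.
From mathcomp Require Import all_boot.
From Stdlib Require Import FunctionalExtensionality Lia.
Set Implicit Arguments. Unset Strict Implicit. Unset Printing Implicit Defensive.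

Fixpoint allS {T : Type} (a : T -> bool) (s : seq T) : bool :=
  match s with [::] => true | x :: s' => if a x then allS a s' else false end.
Fixpoint hasS {T : Type} (a : T -> bool) (s : seq T) : bool :=
  match s with [::] => false | x :: s' => if a x then true else hasS a s' end.
Lemma allSE T (a : T -> bool) s : allS a s = all a s.
Proof. by elim: s => //= x s ->; case: (a x). Qed.
Lemma hasSE T (a : T -> bool) s : hasS a s = has a s.
Proof. by elim: s => //= x s ->; case: (a x). Qed.

Lemma allSP (T : eqType) (s : seq T) (a : pred T) :
  (forall x, x \in s) -> allS a s -> forall x, a x.
Proof. by move=> Hs; rewrite allSE => /allP H x; exact: H. Qed.

Lemma hasSP (T : Type) (s : seq T) (a : pred T) : hasS a s -> exists x, a x.
Proof. elim: s => //= x s IH; case Hx: (a x) => H; [by exists x | exact: IH]. Qed.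

Section Conc.
Variable m : nat.
Variable os : seq 'I_m.
Definition CC := ('I_m * bool)%type.
Definition allC : seq CC := [seq (i, s) | i <- os, s <- [:: false; true]].
Definition tab (g : 'I_m -> 'I_m -> CC) : CC -> CC -> CC :=
  fun p q => let r := g p.1 q.1 in (r.1, r.2 (+) p.2 (+) q.2).
Definition eqC (p q : CC) : bool :=
  if Nat.eqb (nat_of_ord p.1) (nat_of_ord q.1) then (if p.2 then q.2 else negb q.2) else false.
Variable cm : CC -> CC -> CC.
Definition latinb := allS (fun p => allS (fun t => hasS (fun q => eqC (cm p q) t) allC) allC) allC.
Definition cL x y u := let a := cm y x in let b := cm y (cm x u) in
   nth u allC (find (fun w => eqC (cm a w) b) allC).
Definition idxC (p : CC) : nat := p.2 + (nat_of_ord p.1).*2.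
Definition lk (L : seq CC) (p : CC) : CC := nth p L (idxC p).
Definition homL (L : seq CC) := allS (fun u => allS (fun v =>
   eqC (lk L (cm u v)) (cm (lk L u) (lk L v))) allC) allC.
Definition ahomb := allS (fun x => allS (fun y => homL [seq cL x y u | u <- allC]) allC) allC.
Definition nucb y := allS (fun x => allS (fun z => eqC (cm (cm x y) z) (cm x (cm y z))) allC) allC.
Definition goodb := if latinb then (if ahomb then hasS (fun p => if nat_of_ord p.1 != 0 then nucb p else false) allC else true) else true.
End Conc.

Definition o20 := @Ordinal 2 0 isT.
Definition o21 := @Ordinal 2 1 isT.
Definition o40 := @Ordinal 4 0 isT.
Definition o41 := @Ordinal 4 1 isT.
Definition o42 := @Ordinal 4 2 isT.
Definition o43 := @Ordinal 4 3 isT.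
Definition ords2 : seq 'I_2 := [:: o20; o21].
Definition ords4 : seq 'I_4 := [:: o40; o41; o42; o43].
Definition rowok4 (a b c d : 'I_4) : bool :=
  uniq [:: nat_of_ord a; nat_of_ord b; nat_of_ord c; nat_of_ord d].

Definition gen2 (vs : seq (CC 2)) (i j : 'I_2) : CC 2 :=
  match nat_of_ord i, nat_of_ord j with
  | 0, _ => (j, false) | _, 0 => (i, false) | _, _ => nth (i,false) vs 0 end.
Definition idx4 (i j : nat) := match i, j with
  | 1, 1 => 0 | 1, 2 => 1 | 2, 1 => 1 | 1, 3 => 2 | 3, 1 => 2
  | 2, 2 => 3 | 2, 3 => 4 | 3, 2 => 4 | _, _ => 5 end.
Definition gen4 (vs : seq (CC 4)) (i j : 'I_4) : CC 4 :=
  match nat_of_ord i, nat_of_ord j with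
  | 0, _ => (j, false) | _, 0 => (i, false) | a, b => nth (i,false) vs (idx4 a b) end.


Lemma chk2 : allS (fun v1 => goodb ords2 (tab (gen2 [:: v1]))) (allC ords2).
Proof. vm_compute. reflexivity. Qed.

Lemma chk4 : allS (fun v1 => allS (fun v2 => allS (fun v3 =>
  if rowok4 o41 v1.1 v2.1 v3.1 then
  allS (fun v4 => allS (fun v5 =>
    if rowok4 o42 v2.1 v4.1 v5.1 then
    allS (fun v6 =>
      if rowok4 o43 v3.1 v5.1 v6.1 then
        goodb ords4 (tab (gen4 [:: v1; v2; v3; v4; v5; v6]))
      else true) (allC ords4)
    else true) (allC ords4)) (allC ords4)
  else true) (allC ords4)) (allC ords4)) (allC ords4).
Proof. vm_compute. reflexivity. Qed.

Definition Af {V : Type} (add : V -> V -> V) (th : V -> V -> bool) (x y z : V) : bool :=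
  th x y (+) th (add x y) z (+) th y z (+) th x (add y z).

Definition grp {V : Type} (add : V -> V -> V) (z : V) :=
  [/\ associative add, commutative add, left_id z add & forall a, add a a = z].

Record cdata := CData {
  cV : finType; cadd : cV -> cV -> cV; czero : cV; cth : cV -> cV -> bool;
  cgrp : grp cadd czero;
  cthC : forall a b, cth a b = cth b a;
  cth0 : forall a, cth czero a = false;
  cAlin : forall x y c c', Af cadd cth x y (cadd c c') =
                           Af cadd cth x y c (+) Af cadd cth x y c' }.

Arguments cadd : clear implicits.
Arguments czero : clear implicits.
Arguments cth : clear implicits.

Definition cM (D : cdata) : {set cV D} :=
  [set y | [forall x, forall z, ~~ Af (cadd D) (cth D) x y z]].

Ltac gen_th := repeat match goal with |- context [cth ?D ?a ?b] =>
  let t := fresh "t" in move: (cth D a b) => t end.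
Ltac bsolve := gen_th; repeat match goal with [ b : _ |- _ ] =>
  let _ := constr:(b : bool) in case: b end.

Section Loop.
Variable D : cdata.
Local Notation V := (cV D).
Local Notation add := (cadd D).
Local Notation z0 := (czero D).
Local Notation th := (cth D).

Lemma addA : associative add. Proof. by case: (cgrp D). Qed.
Lemma addC : commutative add. Proof. by case: (cgrp D). Qed.
Lemma add0 : left_id z0 add. Proof. by case: (cgrp D). Qed.
Lemma addr0 : right_id z0 add. Proof. by move=> a; rewrite addC add0. Qed.
Lemma addxx a : add a a = z0. Proof. by case: (cgrp D). Qed.
Lemma addKp a b : add a (add a b) = b. Proof. by rewrite addA addxx add0. Qed.
Lemma th0r a : th a z0 = false. Proof. by rewrite cthC cth0. Qed.

Lemma Af0r x y : Af add th x y z0 = false.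
Proof. by rewrite /Af addr0 th0r th0r; case: (th x y). Qed.
Lemma Af0l y z : Af add th z0 y z = false.
Proof. by rewrite /Af add0 !cth0; case: (th y z). Qed.

Definition qmul (p q : V * bool) : V * bool := (add p.1 q.1, p.2 (+) q.2 (+) th p.1 q.1).
Definition qe : V * bool := (z0, false).

Lemma qmulC : is_commutative qmul.
Proof. by move=> [a x] [b y]; rewrite /qmul /= addC cthC (addbC x). Qed.

Lemma q_Lt_bij p : bijective (Lt qmul p).
Proof.
case: p => a x.
exists (fun q => (add a q.1, x (+) q.2 (+) th a (add a q.1))).
- move=> [b y]; rewrite /Lt /qmul /= addKp; congr pair.
  by bsolve.
- move=> [b y]; rewrite /Lt /qmul /= addKp; congr pair.
  by bsolve.
Qed.

Lemma q_Lt_inj p : injective (Lt qmul p).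
Proof. exact: bij_inj (q_Lt_bij p). Qed.

Lemma q_Rt_bij p : bijective (Rt qmul p).
Proof. apply: (eq_bij (q_Lt_bij p)) => q; exact: qmulC. Qed.

Lemma q_Rt_inj p : injective (Rt qmul p).
Proof. exact: bij_inj (q_Rt_bij p). Qed.

Lemma q_loop : is_loop qmul qe.
Proof.
split; last by split; [exact: q_Lt_bij | exact: q_Rt_bij].
move=> [a x]; rewrite /qmul /= add0 addr0 cth0 th0r.
by split; congr pair; case: x.
Qed.

Definition goodf (f : V * bool -> V * bool) := exists phi : V -> bool,
  (forall c c', phi (add c c') = phi c (+) phi c') /\ forall q, f q = (q.1, q.2 (+) phi q.1).

Lemma Leq p q w : qmul q (qmul p w) = qmul (qmul q p) (w.1, w.2 (+) Af add th q.1 p.1 w.1).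
Proof.
case: p q w => [a x] [b y] [c z]; rewrite /qmul /Af /= addA; congr pair.
move: (th a c) (th b a) (th (add b a) c) (th b (add a c)) => t1 t2 t3 t4.
by bsolve.
Qed.

Lemma good_Lxy p q : goodf (Lxy qmul p q).
Proof.
exists (Af add th q.1 p.1); split; first by move=> c c'; exact: cAlin.
move=> w; rewrite /Lxy /= (_ : Lt qmul q (Lt qmul p w) =
   Lt qmul (qmul q p) (w.1, w.2 (+) Af add th q.1 p.1 w.1)) ?finv_f //.
  exact: q_Lt_inj.
exact: Leq.
Qed.

Lemma good_Rxy p q : goodf (Rxy qmul p q).
Proof.
exists (Af add th q.1 p.1); split; first by move=> c c'; exact: cAlin.
move=> w; rewrite /Rxy /= (_ : Rt qmul q (Rt qmul p w) =
   Rt qmul (qmul p q) (w.1, w.2 (+) Af add th q.1 p.1 w.1)) ?finv_f //.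
  exact: q_Rt_inj.
by rewrite /Rt (qmulC w p) (qmulC _ q) (qmulC p q) (qmulC _ (qmul q p)) Leq.
Qed.

Lemma good_Tx p : goodf (Tx qmul p).
Proof.
exists (fun _ => false); split => [c c' //|w].
rewrite /Tx /= /Rt qmulC (finv_f (@q_Lt_inj p)).
by case: w => c z /=; rewrite addbF.
Qed.

Lemma good_inv f : goodf f -> f \o f =1 id.
Proof.
move=> [phi [_ Hf]] [c z]; rewrite /= !Hf /=.
by rewrite -addbA addbb addbF.
Qed.

Lemma inner_good f : inner_map qmul f -> goodf f.
Proof.
elim=> {f}.
- exact: good_Lxy.
- exact: good_Rxy.
- exact: good_Tx.
- by exists (fun _ => false); split => // [[c z]] /=; rewrite addbF.
- move=> f g _ [pf [Af' Hf]] _ [pg [Ag Hg]].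
  exists (fun c => pf c (+) pg c); split.
    by move=> c c'; rewrite Af' Ag; move: (pf c) (pf c') (pg c) (pg c') => b1 b2 b3 b4; bsolve.
  move=> q; rewrite /= Hg Hf /=; congr pair.
  by move: (q.2) (pf q.1) (pg q.1) => b1 b2 b3; bsolve.
- move=> f _ Hf; have Hinv := good_inv Hf.
  have finj : injective f by apply: (can_inj (g := f)) => x; exact: Hinv.
  case: Hf => phi [Hphi Hf]; exists phi; split => // q.
  by rewrite -{1}(Hinv q) /= (finv_f finj) Hf.
Qed.

Lemma good_auto f : goodf f -> is_automorphism qmul f.
Proof.
move=> Hg; have Hinv := good_inv Hg; split.
  by exists f => x; exact: Hinv.
case: Hg => phi [Hphi Hf] [a x] [b y]; rewrite /qmul !Hf /= Hphi; congr pair.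
by move: (phi a) (phi b) (th a b) => b1 b2 b3; bsolve.
Qed.

Lemma q_Aloop : is_Aloop qmul qe.
Proof. split; first exact: q_loop. by move=> f /inner_good /good_auto. Qed.

Lemma qassoc p q r :
  (qmul (qmul p q) r == qmul p (qmul q r)) = ~~ Af add th p.1 q.1 r.1.
Proof.
case: p q r => [a x] [b y] [c z]; rewrite /qmul /Af /= addA xpair_eqE eqxx /=.
move: (th a b) (th (add a b) c) (th b c) (th a (add b c)) => t1 t2 t3 t4.
by bsolve.
Qed.

Lemma q_nuc : middle_nucleus qmul = [set q | q.1 \in cM D].
Proof.
apply/setP => q; rewrite !inE; apply/forallP/forallP => H.
- move=> x; apply/forallP => z.
  by have /forallP/(_ (z, false)) := H (x, false); rewrite qassoc.
- move=> x; apply/forallP => z.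
  by have /forallP/(_ z.1) := H x.1; rewrite qassoc.
Qed.

Lemma q_nuc_card : #|middle_nucleus qmul| = #|cM D| * 2.
Proof.
rewrite q_nuc (_ : [set q | q.1 \in cM D] = setX (cM D) [set: bool]).
  by rewrite cardsX cardsT card_bool.
by apply/setP => -[a x]; rewrite !inE andbT.
Qed.

Lemma q_nonassoc : (exists x y z, Af add th x y z) -> ~ is_associative qmul.
Proof.
move=> [x [y [z H]]] HA.
by have := qassoc (x, false) (y, false) (z, false); rewrite HA eqxx H.
Qed.

End Loop.

Lemma loop_of_data (D : cdata) k l : 0 < k -> 0 < l ->
  #|cV D| = 2 ^ k.-1 -> #|cM D| = 2 ^ l.-1 -> (exists x y z, Af (cadd D) (cth D) x y z) ->
  exists (T : finType) (mul : T -> T -> T) (e : T),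
      is_Aloop mul e /\ is_commutative mul /\ ~ is_associative mul /\
      #|T| = 2 ^ k /\ #|middle_nucleus mul| = 2 ^ l.
Proof.
move=> k0 l0 HV HM Hw.
exists (cV D * bool)%type, (@qmul D), (qe D).
split; first exact: q_Aloop.
split; first exact: qmulC.
split; first exact: q_nonassoc.
split; first by rewrite card_prod HV card_bool -expnSr prednK.
by rewrite q_nuc_card HM -expnSr prednK.
Qed.

Definition addP {A B : Type} (f : A -> A -> A) (g : B -> B -> B) (p q : A * B) : A * B :=
  (f p.1 q.1, g p.2 q.2).

Lemma grp_pair A B (f : A -> A -> A) (g : B -> B -> B) za zb :
  grp f za -> grp g zb -> grp (addP f g) (za, zb).
Proof.
case=> fA fC f0 fxx [gA gC g0 gxx]; split.
- by move=> [a b] [c d] [e h]; rewrite /addP /= fA gA.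
- by move=> [a b] [c d]; rewrite /addP /= fC gC.
- by move=> [a b]; rewrite /addP /= f0 g0.
- by move=> [a b]; rewrite /addP /= fxx gxx.
Qed.

Lemma grp_bool : grp addb false.
Proof. split; [exact: addbA | exact: addbC | exact: addFb | exact: addbb]. Qed.

Lemma Af0m (D : cdata) x w : Af (cadd D) (cth D) x (czero D) w = false.
Proof. by rewrite /Af addr0 add0 th0r cth0; bsolve. Qed.

Section Sum.
Variables D1 D2 : cdata.
Definition sadd := addP (cadd D1) (cadd D2).
Definition sth (p q : cV D1 * cV D2) := cth D1 p.1 q.1 (+) cth D2 p.2 q.2.

Lemma sAf x y z : Af sadd sth x y z =
  Af (cadd D1) (cth D1) x.1 y.1 z.1 (+) Af (cadd D2) (cth D2) x.2 y.2 z.2.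
Proof. rewrite /Af /sth /sadd /addP /=; by bsolve. Qed.

Lemma sthC a b : sth a b = sth b a.
Proof. by rewrite /sth (cthC a.1) (cthC a.2). Qed.

Lemma sth0 a : sth (czero D1, czero D2) a = false.
Proof. by rewrite /sth /= !cth0. Qed.

Lemma sAlin x y c c' : Af sadd sth x y (sadd c c') = Af sadd sth x y c (+) Af sadd sth x y c'.
Proof.
rewrite !sAf /sadd /addP /= !cAlin.
move: (Af _ _ x.1 y.1 c.1) (Af _ _ x.1 y.1 c'.1) (Af _ _ x.2 y.2 c.2) (Af _ _ x.2 y.2 c'.2)
  => b1 b2 b3 b4; by bsolve.
Qed.

Definition sumD : cdata :=
  @CData (cV D1 * cV D2)%type sadd (czero D1, czero D2) sth
    (grp_pair (cgrp D1) (cgrp D2)) sthC sth0 sAlin.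

Lemma sumM : cM sumD = setX (cM D1) (cM D2).
Proof.
apply/setP => -[y1 y2]; rewrite inE in_setX !inE; apply/idP/idP.
- move=> /forallP H; apply/andP; split; apply/forallP => x; apply/forallP => z.
  + have /forallP/(_ (z, czero D2)) := H (x, czero D2).
    by rewrite /= sAf /= Af0l addbF.
  + have /forallP/(_ (czero D1, z)) := H (czero D1, x).
    by rewrite /= sAf /= Af0l.
- case/andP => /forallP H1 /forallP H2; apply/forallP => x; apply/forallP => z.
  rewrite /= sAf.
  by have /forallP/(_ z.1)/negbTE -> := H1 x.1; have /forallP/(_ z.2)/negbTE -> := H2 x.2.
Qed.

Lemma sum_cardV : #|cV sumD| = #|cV D1| * #|cV D2|.
Proof. exact: card_prod. Qed.

Lemma sum_cardM : #|cM sumD| = #|cM D1| * #|cM D2|.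
Proof. by rewrite sumM cardsX. Qed.

Lemma sum_wit : (exists x y z, Af (cadd D1) (cth D1) x y z) ->
  exists x y z, Af (cadd sumD) (cth sumD) x y z.
Proof.
move=> [x [y [z H]]]; exists (x, czero D2), (y, czero D2), (z, czero D2).
by rewrite /= sAf /= Af0l addbF.
Qed.
End Sum.

Definition boolD : cdata :=
  @CData bool addb false (fun _ _ => false) grp_bool (fun _ _ => erefl) (fun _ => erefl)
    (fun _ _ _ _ => erefl).

Lemma boolD_cardM : #|cM boolD| = 2.
Proof.
rewrite (_ : cM boolD = setT) ?cardsT ?card_bool //.
by apply/setP => y; rewrite !inE; apply/forallP => x; apply/forallP => z.
Qed.

Definition chkC {V : eqType} (th : V -> V -> bool) allV :=
  allS (fun a => allS (fun b => th a b == th b a) allV) allV.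
Definition chk0 {V : eqType} (z : V) (th : V -> V -> bool) allV :=
  allS (fun a => th z a == false) allV.
Definition chkL {V : eqType} (add : V -> V -> V) th allV :=
  allS (fun x => allS (fun y => allS (fun c => allS (fun c' =>
    Af add th x y (add c c') == Af add th x y c (+) Af add th x y c') allV) allV) allV) allV.
Definition chkM0 {V : eqType} (z : V) add th allV :=
  allS (fun y => (y == z) || hasS (fun x => hasS (fun w => Af add th x y w) allV) allV) allV.
Definition chkM1 {V : eqType} (z m0 : V) add th allV :=
  (m0 != z) &&
  allS (fun y => (y == z) || (y == m0) || hasS (fun x => hasS (fun w => Af add th x y w) allV) allV) allV &&
  allS (fun x => allS (fun w => ~~ Af add th x m0 w) allV) allV.
Definition chkW {V : eqType} add th (allV : seq V) :=
  hasS (fun x => hasS (fun y => hasS (fun w => Af add th x y w) allV) allV) allV.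

Section Base.
Variables (V : finType) (add : V -> V -> V) (z : V) (th : V -> V -> bool) (allV : seq V).
Hypothesis HV : forall x, x \in allV.
Hypothesis Hg : grp add z.
Hypothesis HC : chkC th allV.
Hypothesis H0 : chk0 z th allV.
Hypothesis HL : chkL add th allV.

Lemma mk_thC a b : th a b = th b a.
Proof. by apply/eqP; have /(allSP HV)/(_ b) := allSP HV HC a. Qed.
Lemma mk_th0 a : th z a = false.
Proof. by apply/eqP; have := allSP HV H0 a. Qed.
Lemma mk_Alin x y c c' : Af add th x y (add c c') = Af add th x y c (+) Af add th x y c'.
Proof.
apply/eqP.
by have /(allSP HV)/(_ y)/(allSP HV)/(_ c)/(allSP HV)/(_ c') := allSP HV HL x.
Qed.

Definition mkD : cdata := @CData V add z th Hg mk_thC mk_th0 mk_Alin.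
End Base.

Definition chkLb {V : eqType} (add : V -> V -> V) th allV (B : seq V) :=
  allS (fun x => allS (fun y => allS (fun c => allS (fun b =>
    Af add th x y (add c b) == Af add th x y c (+) Af add th x y b) B) allV) allV) allV.
Definition chkDec {V : eqType} (add : V -> V -> V) z (B : seq V) (dec : V -> seq V) allV :=
  allS (fun c => (foldr add z (dec c) == c) && all (fun b => b \in B) (dec c)) allV.

Section BaseB.
Variables (V : finType) (add : V -> V -> V) (z : V) (th : V -> V -> bool) (allV B : seq V).
Variable dec : V -> seq V.
Hypothesis HV : forall x, x \in allV.
Hypothesis Hg : grp add z.
Hypothesis HC : chkC th allV.
Hypothesis H0 : chk0 z th allV.
Hypothesis HLb : chkLb add th allV B.
Hypothesis HD : chkDec add z B dec allV.

Lemma mkb_Alin x y c c' : Af add th x y (add c c') = Af add th x y c (+) Af add th x y c'.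
Proof.
case: Hg => gA gC g0 gxx.
have thz a : th a z = false by rewrite (mk_thC HV HC) (mk_th0 HV H0).
set f := Af add th x y.
have fz : f z = false by rewrite /f /Af (gC y z) g0 !thz; case: (th x y).
have fb : forall c b, b \in B -> f (add c b) = f c (+) f b.
  move=> c0 b Hb; apply/eqP.
  by have /(allSP HV)/(_ y)/(allSP HV)/(_ c0) := allSP HV HLb x; rewrite allSE => /allP; apply.
have /andP [/eqP Hc' HB] := allSP HV HD c'.
rewrite -Hc'; elim: (dec c') HB => [|b l IH] /=.
  by rewrite (gC c z) g0 fz addbF.
case/andP => Hb /IH {}IH.
by rewrite (gC b) gA fb // IH fb // addbA.
Qed.

Definition mkDb : cdata := @CData V add z th Hg (mk_thC HV HC) (mk_th0 HV H0) mkb_Alin.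
End BaseB.

Lemma M0_card (D : cdata) allV : (forall x, x \in allV) ->
  chkM0 (czero D) (cadd D) (cth D) allV -> #|cM D| = 1.
Proof.
move=> HV H; rewrite (_ : cM D = [set czero D]) ?cards1 //.
apply/setP => y; rewrite !inE; apply/idP/idP; last first.
  by move/eqP ->; apply/forallP => x; apply/forallP => w; rewrite Af0m.
move=> /forallP Hy; have := allSP HV H y; case: eqP => //= _ /hasSP [x /hasSP [w Hw]].
by have /forallP/(_ w) := Hy x; rewrite Hw.
Qed.

Lemma M1_card (D : cdata) allV m0 : (forall x, x \in allV) ->
  chkM1 (czero D) m0 (cadd D) (cth D) allV -> #|cM D| = 2.
Proof.
move=> HV /andP [/andP [Hm H] Hm0]; rewrite (_ : cM D = [set czero D; m0]).
  by rewrite cards2 eq_sym Hm.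
apply/setP => y; rewrite !inE; apply/idP/idP; last first.
  case/orP => /eqP ->; apply/forallP => x; apply/forallP => w; first by rewrite Af0m.
  by have /(allSP HV)/(_ w) := allSP HV Hm0 x.
move=> /forallP Hy; have := allSP HV H y; case: eqP => //= _; case: eqP => //= _.
move=> /hasSP [x /hasSP [w Hw]].
by have /forallP/(_ w) := Hy x; rewrite Hw.
Qed.

Lemma W_wit (D : cdata) allV : chkW (cadd D) (cth D) allV ->
  exists x y z, Af (cadd D) (cth D) x y z.
Proof. by move=> /hasSP [x /hasSP [y /hasSP [w H]]]; exists x, y, w. Qed.

Notation V2 := (bool * bool)%type.
Notation V3 := (bool * V2)%type.
Notation V4 := (bool * V3)%type.
Notation V5 := (bool * V4)%type.
Definition add2 : V2 -> V2 -> V2 := addP addb addb.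
Definition add3 : V3 -> V3 -> V3 := addP addb add2.
Definition add4 : V4 -> V4 -> V4 := addP addb add3.
Definition add5 : V5 -> V5 -> V5 := addP addb add4.
Definition z2 : V2 := (false, false).
Definition z3 : V3 := (false, z2).
Definition z4 : V4 := (false, z3).
Definition z5 : V5 := (false, z4).
Lemma grp2 : grp add2 z2. Proof. exact: grp_pair grp_bool grp_bool. Qed.
Lemma grp3 : grp add3 z3. Proof. exact: grp_pair grp_bool grp2. Qed.
Lemma grp4 : grp add4 z4. Proof. exact: grp_pair grp_bool grp3. Qed.
Lemma grp5 : grp add5 z5. Proof. exact: grp_pair grp_bool grp4. Qed.
Definition prodL {A B : Type} (s : seq A) (t : seq B) : seq (A * B) :=
  [seq (a, b) | a <- s, b <- t].
Lemma mem_prodL (A B : eqType) (s : seq A) (t : seq B) :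
  (forall x, x \in s) -> (forall y, y \in t) -> forall p, p \in prodL s t.
Proof. by move=> Hs Ht [a b]; apply: allpairs_f. Qed.
Definition allB := [:: false; true].
Lemma mem_allB b : b \in allB. Proof. by case: b. Qed.
Definition all2 : seq V2 := prodL allB allB.
Definition all3 : seq V3 := prodL allB all2.
Definition all4 : seq V4 := prodL allB all3.
Definition all5 : seq V5 := prodL allB all4.
Lemma mem_all2 x : x \in all2. Proof. exact: mem_prodL mem_allB mem_allB x. Qed.
Lemma mem_all3 x : x \in all3. Proof. exact: mem_prodL mem_allB mem_all2 x. Qed.
Lemma mem_all4 x : x \in all4. Proof. exact: mem_prodL mem_allB mem_all3 x. Qed.
Lemma mem_all5 x : x \in all5. Proof. exact: mem_prodL mem_allB mem_all4 x. Qed.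

Definition th21 (x y : V2) : bool :=
  let: (x0, x1) := x in let: (y0, y1) := y in
  (x0 && y0 && y1) (+) (x0 && x1 && y0).

Definition th30 (x y : V3) : bool :=
  let: (x0, (x1, x2)) := x in let: (y0, (y1, y2)) := y in
  (x0 && y0 && y1) (+) (x0 && x1 && y0) (+) (x0 && y1 && y2) (+) (x1 && x2 && y0) (+) (x1 && x2 && y2) (+) (x2 && y1 && y2).

Definition th31 (x y : V3) : bool :=
  let: (x0, (x1, x2)) := x in let: (y0, (y1, y2)) := y in
  (x0 && y1 && y2) (+) (x1 && x2 && y0).

Definition th40 (x y : V4) : bool :=
  let: (x0, (x1, (x2, x3))) := x in let: (y0, (y1, (y2, y3))) := y in
  (x0 && y0 && y2) (+) (x0 && x2 && y0) (+) (x0 && y1 && y2) (+) (x1 && x2 && y0) (+) (x1 && y2) (+) (x2 && y1) (+) (x1 && y1 && y2) (+) (x1 && x2 && y1) (+) (x2 && y2 && y3) (+) (x2 && x3 && y2) (+) (x1 && x3 && y2) (+) (x2 && y1 && y3).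

Definition th50 (x y : V5) : bool :=
  let: (x0, (x1, (x2, (x3, x4)))) := x in let: (y0, (y1, (y2, (y3, y4)))) := y in
  (x0 && y3) (+) (x3 && y0) (+) (x0 && y2 && y3) (+) (x2 && x3 && y0) (+) (x1 && y1) (+) (x2 && y2) (+) (x3 && y4) (+) (x4 && y3) (+) (x0 && x1 && y1) (+) (x1 && y0 && y1) (+) (x0 && x2 && y2) (+) (x2 && y0 && y2) (+) (x0 && x3 && y1) (+) (x1 && y0 && y3) (+) (x0 && x3 && y4) (+) (x4 && y0 && y3) (+) (x0 && x4 && y2) (+) (x2 && y0 && y4) (+) (x1 && x2 && y3) (+) (x3 && y1 && y2) (+) (x1 && x3 && y4) (+) (x4 && y1 && y3).

Lemma ck21C : chkC th21 all2. Proof. vm_compute. reflexivity. Qed.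
Lemma ck210 : chk0 z2 th21 all2. Proof. vm_compute. reflexivity. Qed.
Lemma ck21L : chkL add2 th21 all2. Proof. vm_compute. reflexivity. Qed.
Lemma ck21W : chkW add2 th21 all2. Proof. vm_compute. reflexivity. Qed.
Definition D21 : cdata := @mkD _ add2 z2 th21 all2 mem_all2 grp2 ck21C ck210 ck21L.
Lemma D21_W : exists x y z, Af (cadd D21) (cth D21) x y z.
Proof. exact: (@W_wit D21 all2 ck21W). Qed.
Lemma D21_V : #|cV D21| = 2 ^ 2.
Proof. by rewrite /= !card_prod !card_bool. Qed.

Lemma ck30C : chkC th30 all3. Proof. vm_compute. reflexivity. Qed.
Lemma ck300 : chk0 z3 th30 all3. Proof. vm_compute. reflexivity. Qed.
Lemma ck30L : chkL add3 th30 all3. Proof. vm_compute. reflexivity. Qed.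
Lemma ck30W : chkW add3 th30 all3. Proof. vm_compute. reflexivity. Qed.
Definition D30 : cdata := @mkD _ add3 z3 th30 all3 mem_all3 grp3 ck30C ck300 ck30L.
Lemma D30_W : exists x y z, Af (cadd D30) (cth D30) x y z.
Proof. exact: (@W_wit D30 all3 ck30W). Qed.
Lemma D30_V : #|cV D30| = 2 ^ 3.
Proof. by rewrite /= !card_prod !card_bool. Qed.

Lemma ck31C : chkC th31 all3. Proof. vm_compute. reflexivity. Qed.
Lemma ck310 : chk0 z3 th31 all3. Proof. vm_compute. reflexivity. Qed.
Lemma ck31L : chkL add3 th31 all3. Proof. vm_compute. reflexivity. Qed.
Lemma ck31W : chkW add3 th31 all3. Proof. vm_compute. reflexivity. Qed.
Definition D31 : cdata := @mkD _ add3 z3 th31 all3 mem_all3 grp3 ck31C ck310 ck31L.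
Lemma D31_W : exists x y z, Af (cadd D31) (cth D31) x y z.
Proof. exact: (@W_wit D31 all3 ck31W). Qed.
Lemma D31_V : #|cV D31| = 2 ^ 3.
Proof. by rewrite /= !card_prod !card_bool. Qed.

Lemma ck40C : chkC th40 all4. Proof. vm_compute. reflexivity. Qed.
Lemma ck400 : chk0 z4 th40 all4. Proof. vm_compute. reflexivity. Qed.
Definition B4 : seq V4 := [:: z4; (true, (false, (false, false))); (false, (true, (false, false))); (false, (false, (true, false))); (false, (false, (false, true)))].
Definition dec4 (c : V4) : seq V4 := let: (c0, (c1, (c2, c3))) := c in [:: (c0, (false, (false, false))); (false, (c1, (false, false))); (false, (false, (c2, false))); (false, (false, (false, c3)))].
Lemma ck40L : chkLb add4 th40 all4 B4. Proof. vm_compute. reflexivity. Qed.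
Lemma ck40D : chkDec add4 z4 B4 dec4 all4. Proof. vm_compute. reflexivity. Qed.
Lemma ck40W : chkW add4 th40 all4. Proof. vm_compute. reflexivity. Qed.
Definition D40 : cdata := @mkDb _ add4 z4 th40 all4 B4 dec4 mem_all4 grp4 ck40C ck400 ck40L ck40D.
Lemma D40_W : exists x y z, Af (cadd D40) (cth D40) x y z.
Proof. exact: (@W_wit D40 all4 ck40W). Qed.
Lemma D40_V : #|cV D40| = 2 ^ 4.
Proof. by rewrite /= !card_prod !card_bool. Qed.

Lemma ck50C : chkC th50 all5. Proof. vm_compute. reflexivity. Qed.
Lemma ck500 : chk0 z5 th50 all5. Proof. vm_compute. reflexivity. Qed.
Definition B5 : seq V5 := [:: z5; (true, (false, (false, (false, false)))); (false, (true, (false, (false, false)))); (false, (false, (true, (false, false)))); (false, (false, (false, (true, false)))); (false, (false, (false, (false, true))))].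
Definition dec5 (c : V5) : seq V5 := let: (c0, (c1, (c2, (c3, c4)))) := c in [:: (c0, (false, (false, (false, false)))); (false, (c1, (false, (false, false)))); (false, (false, (c2, (false, false)))); (false, (false, (false, (c3, false)))); (false, (false, (false, (false, c4))))].
Lemma ck50L : chkLb add5 th50 all5 B5. Proof. vm_compute. reflexivity. Qed.
Lemma ck50D : chkDec add5 z5 B5 dec5 all5. Proof. vm_compute. reflexivity. Qed.
Lemma ck50W : chkW add5 th50 all5. Proof. vm_compute. reflexivity. Qed.
Definition D50 : cdata := @mkDb _ add5 z5 th50 all5 B5 dec5 mem_all5 grp5 ck50C ck500 ck50L ck50D.
Lemma D50_W : exists x y z, Af (cadd D50) (cth D50) x y z.
Proof. exact: (@W_wit D50 all5 ck50W). Qed.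
Lemma D50_V : #|cV D50| = 2 ^ 5.
Proof. by rewrite /= !card_prod !card_bool. Qed.

Lemma ck30M : chkM0 z3 add3 th30 all3. Proof. vm_compute. reflexivity. Qed.
Lemma D30_M : #|cM D30| = 1. Proof. exact: (@M0_card D30 all3 mem_all3 ck30M). Qed.
Lemma ck40M : chkM0 z4 add4 th40 all4. Proof. vm_compute. reflexivity. Qed.
Lemma D40_M : #|cM D40| = 1. Proof. exact: (@M0_card D40 all4 mem_all4 ck40M). Qed.
Lemma ck50M : chkM0 z5 add5 th50 all5. Proof. vm_compute. reflexivity. Qed.
Lemma D50_M : #|cM D50| = 1. Proof. exact: (@M0_card D50 all5 mem_all5 ck50M). Qed.
Lemma ck21M : chkM1 z2 (false, true) add2 th21 all2. Proof. vm_compute. reflexivity. Qed.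
Lemma D21_M : #|cM D21| = 2. Proof. exact: (@M1_card D21 all2 _ mem_all2 ck21M). Qed.
Lemma ck31M : chkM1 z3 (true, (false, false)) add3 th31 all3. Proof. vm_compute. reflexivity. Qed.
Lemma D31_M : #|cM D31| = 2. Proof. exact: (@M1_card D31 all3 _ mem_all3 ck31M). Qed.

Lemma eqbE i j : Nat.eqb i j = (i == j).
Proof. by elim: i j => [|i IH] [|j] //=; rewrite IH eqSS. Qed.

Lemma eqCE m (p q : CC m) : eqC p q = (p == q).
Proof.
case: p q => [[i Hi] s] [[j Hj] t]; rewrite /eqC /= xpair_eqE.
rewrite -val_eqE /= eqbE; case: (i == j) => //.
by case: s; case: t.
Qed.

Lemma mem_allC m (os : seq 'I_m) : (forall i, i \in os) -> forall p : CC m, p \in allC os.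
Proof. by move=> Hos [i s]; apply: allpairs_f => //; case: s. Qed.

Section Transport.
Variables (T : finType) (mul : T -> T -> T) (e : T).
Hypothesis HA : is_Aloop mul e.

Lemma Lt_inj x : injective (Lt mul x).
Proof. by case: HA => [[_ [H _]] _]; exact: bij_inj (H x). Qed.

Lemma Lxy_spec x y u : mul (mul y x) (Lxy mul x y u) = mul y (mul x u).
Proof. by rewrite /Lxy /=; exact: (f_finv (@Lt_inj (mul y x))). Qed.

Lemma Lxy_hom x y u v : Lxy mul x y (mul u v) = mul (Lxy mul x y u) (Lxy mul x y v).
Proof. by case: HA => _ H; case: (H _ (inner_L mul x y)) => _ ->. Qed.

Variables (m : nat) (os : seq 'I_m).
Hypothesis Hos : forall i, i \in os.
Hypothesis Hnth : forall p : CC m, idxC p < size (allC os) /\ nth p (allC os) (idxC p) = p.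
Variables (F : CC m -> T) (Fi : T -> CC m).
Hypotheses (FK : cancel F Fi) (FiK : cancel Fi F).
Definition cmT p q := Fi (mul (F p) (F q)).
Lemma F_cm p q : F (cmT p q) = mul (F p) (F q).
Proof. exact: FiK. Qed.
Lemma F_inj : injective F. Proof. exact: can_inj FK. Qed.

Lemma latin_T : latinb os cmT.
Proof.
rewrite /latinb allSE; apply/allP => p _; rewrite allSE; apply/allP => t _.
rewrite hasSE; apply/hasP.
case: HA => [[_ [H _]] _]; case: (H (F p)) => g _ gK.
exists (Fi (g (F t))); first exact: mem_allC.
by rewrite eqCE; apply/eqP/F_inj; rewrite F_cm FiK; exact: gK.
Qed.

Lemma FcL x y u : F (cL os cmT x y u) = Lxy mul (F x) (F y) (F u).
Proof.
rewrite /cL.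
set P := fun w => _.
have HP : has P (allC os).
  apply/hasP; exists (Fi (Lxy mul (F x) (F y) (F u))); first exact: mem_allC.
  by rewrite /P eqCE; apply/eqP/F_inj; rewrite !F_cm FiK Lxy_spec.
have := nth_find u HP; rewrite {1}/P eqCE => /eqP /(congr1 F).
rewrite !F_cm -(Lxy_spec (F x) (F y) (F u)); exact: Lt_inj.
Qed.

Lemma lk_map (f : CC m -> CC m) p : lk [seq f u | u <- allC os] p = f p.
Proof.
case: (Hnth p) => Hs Hn; rewrite /lk (set_nth_default (f p)) ?size_map //.
by rewrite (nth_map p) // Hn.
Qed.

Lemma ahom_T : ahomb os cmT.
Proof.
rewrite /ahomb allSE; apply/allP => x _; rewrite allSE; apply/allP => y _.
rewrite /homL allSE; apply/allP => u _; rewrite allSE; apply/allP => v _.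
by rewrite !lk_map eqCE; apply/eqP/F_inj; rewrite F_cm !FcL F_cm Lxy_hom.
Qed.

Lemma nuc_T p : nucb os cmT p -> F p \in middle_nucleus mul.
Proof.
move=> H; rewrite inE; apply/forallP => X; apply/forallP => Z.
rewrite -(FiK X) -(FiK Z).
have := allSP (mem_allC Hos) H (Fi X) => /(allSP (mem_allC Hos))/(_ (Fi Z)).
by rewrite eqCE => /eqP /(congr1 F); rewrite !F_cm => ->.
Qed.
End Transport.


Section Struct.
Variables (T : finType) (mul : T -> T -> T) (e : T).
Hypotheses (HA : is_Aloop mul e) (HC : is_commutative mul).
Variable n : T.
Hypotheses (Hn : n \in middle_nucleus mul) (Hne : n != e)
  (HN : forall y, y \in middle_nucleus mul -> y = e \/ y = n).

Let Li x : injective (Lt mul x) := @Lt_inj T mul e HA x.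

Lemma mul1x x : mul e x = x. Proof. by case: HA => [[H _] _]; case: (H x). Qed.
Lemma mulx1 x : mul x e = x. Proof. by case: HA => [[H _] _]; case: (H x). Qed.

Lemma Lxy_e x y : Lxy mul x y e = e.
Proof. by apply: (@Li (mul y x)); rewrite /Lt (Lxy_spec HA) // !mulx1. Qed.

Lemma aut_N f y : is_automorphism mul f -> y \in middle_nucleus mul ->
  f y \in middle_nucleus mul.
Proof.
case=> [[g fg gf] Hf]; rewrite !inE => /forallP Hy; apply/forallP => x; apply/forallP => z.
rewrite -(gf x) -(gf z) -!Hf; apply/eqP; congr f; apply/eqP.
by move/forallP: (Hy (g x)) => /(_ (g z)).
Qed.

Lemma n_rnuc x y : mul (mul y x) n = mul y (mul x n).
Proof.
have Haut := HA.2 _ (inner_L mul x y).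
have := aut_N Haut Hn; case/HN => H.
  case: Haut => /bij_inj Hinj _; exfalso; move/negP: Hne; apply; apply/eqP.
  by apply: Hinj; rewrite H Lxy_e.
by rewrite -{1}H (Lxy_spec HA).
Qed.

Lemma n_mnuc x z : mul (mul x n) z = mul x (mul n z).
Proof. by move: Hn; rewrite inE => /forallP/(_ x)/forallP/(_ z)/eqP. Qed.

Lemma nn : mul n n = e.
Proof.
have: mul n n \in middle_nucleus mul.
  rewrite inE; apply/forallP => x; apply/forallP => z; apply/eqP.
  by rewrite -n_rnuc n_mnuc n_mnuc n_mnuc.
case/HN => // H; move: Hne; rewrite (_ : n = e) ?eqxx //.
by apply: (@Li n); rewrite /Lt H mulx1.
Qed.

Lemma xnn x : mul (mul x n) n = x. Proof. by rewrite n_rnuc nn mulx1. Qed.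
Lemma xn_y x y : mul (mul x n) y = mul (mul x y) n.
Proof. by rewrite n_mnuc (HC n y) n_rnuc. Qed.
Lemma x_yn x y : mul x (mul y n) = mul (mul x y) n. Proof. by rewrite n_rnuc. Qed.

Definition pairsn (rs : seq T) := flatten [seq [:: r; mul r n] | r <- rs].
Lemma size_pairsn rs : size (pairsn rs) = (size rs).*2.
Proof. by elim: rs => //= r rs IH; rewrite IH doubleS. Qed.
Lemma nth_pairsn rs i (s : bool) : i < size rs ->
  nth e (pairsn rs) (s + i.*2) = if s then mul (nth e rs i) n else nth e rs i.
Proof.
elim: rs i => // r rs IH [|i] /=; first by clear IH; case: s.
by move=> Hi; rewrite doubleS !addnS /= IH.
Qed.
Definition closedn (L : seq T) := forall x, x \in L -> mul x n \in L.
Lemma pairsn_rcons rs r : pairsn (rcons rs r) = pairsn rs ++ [:: r; mul r n].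
Proof. by rewrite /pairsn -cats1 map_cat flatten_cat. Qed.

Lemma exists_notin (L : seq T) : size L < #|T| -> exists r, r \notin L.
Proof.
move=> HL; case: (pickP (fun r => r \notin L)) => [r Hr|H]; first by exists r.
have: #|T| <= size L.
  apply: (leq_trans _ (card_size L)); apply: subset_leq_card; apply/subsetP => x _.
  by move: (H x) => /= /negbFE.
by rewrite leqNgt HL.
Qed.

Lemma build (m : nat) : 0 < m -> m.*2 <= #|T| ->
  exists rs, [/\ size rs = m, nth e rs 0 = e, uniq (pairsn rs) & closedn (pairsn rs)].
Proof.
elim: m => // m IH _ Hm.
case: m IH Hm => [|m] IH Hm.
  exists [:: e]; split => //.
    by rewrite /pairsn /= mul1x inE eq_sym Hne.
  move=> x; rewrite /pairsn /= mul1x !inE => /orP [] /eqP ->; rewrite ?mul1x ?nn eqxx ?orbT //.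
have [|rs [Hs H0 Hu Hc]] := IH isT.
  by apply: leq_trans Hm; rewrite leq_double.
have [r Hr] : exists r, r \notin pairsn rs.
  by apply: exists_notin; rewrite size_pairsn Hs (leq_trans _ Hm) // ltn_double.
have Hrn : mul r n \notin pairsn rs by apply/negP => /Hc; rewrite xnn; apply/negP.
have Hrr : r != mul r n.
  apply/negP => /eqP H; move: Hne; rewrite (_ : n = e) ?eqxx //.
  by apply: (@Li r); rewrite /Lt -H mulx1.
exists (rcons rs r); split.
- by rewrite size_rcons Hs.
- by rewrite nth_rcons Hs.
- by rewrite pairsn_rcons cat_uniq Hu /= (negbTE Hr) (negbTE Hrn) !inE (negbTE Hrr).
- move=> x; rewrite pairsn_rcons !mem_cat !inE => /orP [/Hc ->//|/orP [] /eqP ->].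
    by rewrite eqxx !orbT.
  by rewrite xnn eqxx !orbT.
Qed.

Section FS.
Variables (m : nat) (rs : seq T).
Hypotheses (Hs : size rs = m) (H0 : nth e rs 0 = e) (Hu : uniq (pairsn rs)).
Definition FF (p : CC m) : T := nth e (pairsn rs) (p.2 + (nat_of_ord p.1).*2).

Lemma idx_lt (i : 'I_m) (s : bool) : s + i.*2 < m.*2.
Proof.
apply: (@leq_trans (i.+1).*2); last by rewrite leq_double.
by rewrite doubleS; case: s.
Qed.

Lemma FF_inj : injective FF.
Proof.
move=> [i s] [j t] /eqP; rewrite /FF /= nth_uniq ?size_pairsn ?Hs ?idx_lt // => /eqP H.
have Hst : s = t by move: (congr1 odd H); rewrite !oddD !odd_double !addbF !oddb.
have Hij : i = j by apply: val_inj; move: (congr1 half H); rewrite !half_bit_double.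
by rewrite Hst Hij.
Qed.

Lemma FF_s (i : 'I_m) s : FF (i, s) = if s then mul (FF (i, false)) n else FF (i, false).
Proof. by rewrite /FF !nth_pairsn ?Hs. Qed.

Lemma FF_xor (k : 'I_m) u b : FF (k, u (+) b) = if b then mul (FF (k, u)) n else FF (k, u).
Proof.
case: b; last by rewrite addbF.
by case: u => /=; rewrite (FF_s k true) ?xnn.
Qed.

Lemma FF_0 (i : 'I_m) s : nat_of_ord i = 0 -> FF (i, s) = if s then n else e.
Proof. by move=> Hi; rewrite /FF /= Hi nth_pairsn ?Hs ?H0 ?mul1x //; case: s; rewrite ?mul1x //; case: i Hi => [[|?] ?]. Qed.

Hypothesis HT : #|T| = m.*2.

Lemma FF_bij : bijective FF.
Proof.
have Hc : #|T| <= #|{: CC m}| by rewrite card_prod card_ord card_bool muln2 HT.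
exact: (inj_card_bij FF_inj Hc).
Qed.
End FS.
End Struct.

Lemma mem_ords4 (i : 'I_4) : i \in ords4.
Proof. by case: i => [[|[|[|[|k]]]] Hk]. Qed.
Lemma mem_ords2 (i : 'I_2) : i \in ords2.
Proof. by case: i => [[|[|k]] Hk]. Qed.

Lemma gen4_eq (g : 'I_4 -> 'I_4 -> CC 4) :
  (forall i j, g i j = g j i) -> (forall i j, nat_of_ord i = 0 -> g i j = (j, false)) ->
  forall i j, g i j = gen4 [:: g o41 o41; g o41 o42; g o41 o43; g o42 o42; g o42 o43; g o43 o43] i j.
Proof.
move=> gsym g0 i j; rewrite /gen4.
case Ei: (nat_of_ord i) => [|[|[|[|?]]]]; first exact: g0.
all: case Ej: (nat_of_ord j) => [|[|[|[|?]]]]; try by rewrite gsym g0.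
all: rewrite /idx4 /=.
all: try (by congr g; apply: val_inj);
     try (by rewrite gsym; congr g; apply: val_inj).
all: try by move: (ltn_ord i); rewrite Ei.
all: try by move: (ltn_ord j); rewrite Ej.
Qed.

Lemma gen2_eq (g : 'I_2 -> 'I_2 -> CC 2) :
  (forall i j, g i j = g j i) -> (forall i j, nat_of_ord i = 0 -> g i j = (j, false)) ->
  forall i j, g i j = gen2 [:: g o21 o21] i j.
Proof.
move=> gsym g0 i j; rewrite /gen2.
case Ei: (nat_of_ord i) => [|[|?]]; first exact: g0.
all: case Ej: (nat_of_ord j) => [|[|?]]; try by rewrite gsym g0.
all: rewrite /=.
all: try (by congr g; apply: val_inj).
all: try by move: (ltn_ord i); rewrite Ei.
all: try by move: (ltn_ord j); rewrite Ej.
Qed.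

Lemma nth_allC4 (p : CC 4) : idxC p < size (allC ords4) /\ nth p (allC ords4) (idxC p) = p.
Proof. by case: p => [[[|[|[|[|k]]]] Hk] []] //; split => //; apply/eqP. Qed.
Lemma nth_allC2 (p : CC 2) : idxC p < size (allC ords2) /\ nth p (allC ords2) (idxC p) = p.
Proof. by case: p => [[[|[|k]] Hk] []] //; split => //; apply/eqP. Qed.

Section Fin.
Variables (T : finType) (mul : T -> T -> T) (e : T).
Hypotheses (HA : is_Aloop mul e) (HC : is_commutative mul).
Variable n : T.
Hypotheses (Hn : n \in middle_nucleus mul) (Hne : n != e)
  (HN : forall y, y \in middle_nucleus mul -> y = e \/ y = n).

Lemma no8 : #|T| = 8 -> False.
Proof.
move=> HT8.
have xn_y := xn_y HA HC Hn Hne HN.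
have x_yn := x_yn HA Hn Hne HN.
have xnn := xnn HA Hn Hne HN.
have mul1x := mul1x HA.
have [|rs [Hs H0 Hu _]] := @build T mul e HA n Hn Hne HN 4 isT; first by rewrite HT8.
pose F := FF mul e n (m:=4) rs.
have Finj : injective F := FF_inj Hs Hu.
have [Fi FK FiK] := FF_bij e Hs Hu (HT8 : #|T| = 4.*2).
have Fxor := FF_xor HA Hn Hne HN Hs.
have Fs := FF_s mul e n Hs.
have F0 := FF_0 HA n Hs H0.
have Fcm := F_cm mul FiK.
pose cm := cmT mul F Fi.
pose g (i j : 'I_4) := cm (i, false) (j, false).
have cm_tab : forall p q, cm p q = tab g p q.
  move=> [i s] [j t]; apply: Finj; rewrite /tab /g /cm /F /= Fcm Fxor Fxor -surjective_pairing Fcm.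
  rewrite (Fs i s) (Fs j t).
  case: s; case: t => //=.
  by rewrite xn_y x_yn.
have gsym : forall i j, g i j = g j i.
  by move=> i j; apply: Finj; rewrite /g /cm /F !Fcm HC.
have g0 : forall (i j : 'I_4), nat_of_ord i = 0 -> g i j = (j, false).
  by move=> i j Hi; apply: Finj; rewrite /g /cm /F Fcm (F0 i false) ?mul1x //; apply: val_inj.
have Hg := gen4_eq gsym g0.
have Hcm : cm = tab (gen4 [:: g o41 o41; g o41 o42; g o41 o43; g o42 o42; g o42 o43; g o43 o43]).
  apply: functional_extensionality => p; apply: functional_extensionality => q.
  by rewrite cm_tab /tab (Hg p.1 q.1).
have cm_inj : forall p q q', cm p q = cm p q' -> q = q'.
  move=> p q q' /(congr1 F); rewrite /cm /F !Fcm => /(@Lt_inj _ _ _ HA) /Finj //.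
have qinj : forall (i j j' : 'I_4), (g i j).1 = (g i j').1 -> j = j'.
  move=> i j j' E.
  have H : cm (i, false) (j', (g i j).2 (+) (g i j').2) = cm (i, false) (j, false).
    rewrite !cm_tab /tab /= E; congr pair.
    by move: (g i j).2 (g i j').2 => a b; case: a; case: b.
  by case: (cm_inj _ _ _ H).
have g0' : forall (i j : 'I_4), nat_of_ord j = 0 -> g i j = (i, false).
  by move=> i j Hj; rewrite gsym g0.
have rows : forall i : 'I_4, uniq [seq nat_of_ord (g i j).1 | j <- ords4].
  move=> i; rewrite map_inj_uniq // => j j' /ord_inj /qinj //.
have r1 : rowok4 o41 (g o41 o41).1 (g o41 o42).1 (g o41 o43).1.
  by have := rows o41; rewrite /= (g0' o41 o40).
have r2 : rowok4 o42 (g o41 o42).1 (g o42 o42).1 (g o42 o43).1.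
  by have := rows o42; rewrite /= (g0' o42 o40) // (gsym o42 o41).
have r3 : rowok4 o43 (g o41 o43).1 (g o42 o43).1 (g o43 o43).1.
  by have := rows o43; rewrite /= (g0' o43 o40) // (gsym o43 o41) (gsym o43 o42).
have M := mem_allC mem_ords4.
have H1 := allSP M chk4 (g o41 o41); cbv beta in H1.
have H2 := allSP M H1 (g o41 o42); cbv beta in H2.
have H3 := allSP M H2 (g o41 o43); cbv beta in H3.
rewrite r1 in H3.
have H4 := allSP M H3 (g o42 o42); cbv beta in H4.
have H5 := allSP M H4 (g o42 o43); cbv beta in H5.
rewrite r2 in H5.
have H6 := allSP M H5 (g o43 o43); cbv beta in H6.
rewrite r3 in H6.
move: H6.
rewrite -Hcm /goodb (latin_T HA mem_ords4 FK FiK) (ahom_T HA mem_ords4 nth_allC4 FK FiK).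
move/hasSP => [p]; case: ifP => // Hp0 /(nuc_T mem_ords4 FiK) Hnuc.
have Hp : p = (@Ordinal 4 0 isT, false) \/ p = (@Ordinal 4 0 isT, true).
  case: (HN Hnuc) => HFp; [left | right]; apply: Finj; rewrite /F HFp F0 //.
by move: Hp0; case: Hp => ->.
Qed.


Lemma no4 : #|T| = 4 -> False.
Proof.
move=> HT4.
have xn_y := xn_y HA HC Hn Hne HN.
have x_yn := x_yn HA Hn Hne HN.
have xnn := xnn HA Hn Hne HN.
have mul1x := mul1x HA.
have [|rs [Hs H0 Hu _]] := @build T mul e HA n Hn Hne HN 2 isT; first by rewrite HT4.
pose F := FF mul e n (m:=2) rs.
have Finj : injective F := FF_inj Hs Hu.
have [Fi FK FiK] := FF_bij e Hs Hu (HT4 : #|T| = 2.*2).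
have Fxor := FF_xor HA Hn Hne HN Hs.
have Fs := FF_s mul e n Hs.
have F0 := FF_0 HA n Hs H0.
have Fcm := F_cm mul FiK.
pose cm := cmT mul F Fi.
pose g (i j : 'I_2) := cm (i, false) (j, false).
have cm_tab : forall p q, cm p q = tab g p q.
  move=> [i s] [j t]; apply: Finj; rewrite /tab /g /cm /F /= Fcm Fxor Fxor -surjective_pairing Fcm.
  rewrite (Fs i s) (Fs j t).
  case: s; case: t => //=.
  by rewrite xn_y x_yn.
have gsym : forall i j, g i j = g j i.
  by move=> i j; apply: Finj; rewrite /g /cm /F !Fcm HC.
have g0 : forall (i j : 'I_2), nat_of_ord i = 0 -> g i j = (j, false).
  by move=> i j Hi; apply: Finj; rewrite /g /cm /F Fcm (F0 i false) ?mul1x //; apply: val_inj.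
have Hg := gen2_eq gsym g0.
have Hcm : cm = tab (gen2 [:: g o21 o21]).
  apply: functional_extensionality => p; apply: functional_extensionality => q.
  by rewrite cm_tab /tab (Hg p.1 q.1).
have Hgood := chk2.
move/(allSP (mem_allC mem_ords2))/(_ (g o21 o21)): Hgood.
rewrite -Hcm /goodb (latin_T HA mem_ords2 FK FiK) (ahom_T HA mem_ords2 nth_allC2 FK FiK).
move/hasSP => [p]; case: ifP => // Hp0 /(nuc_T mem_ords2 FiK) Hnuc.
have Hp : p = (@Ordinal 2 0 isT, false) \/ p = (@Ordinal 2 0 isT, true).
  case: (HN Hnuc) => HFp; [left | right]; apply: Finj; rewrite /F HFp F0 //.
by move: Hp0; case: Hp => ->.
Qed.


End Fin.

Lemma ext_bool (D : cdata) j : exists D' : cdata,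
  [/\ #|cV D'| = #|cV D| * 2 ^ j, #|cM D'| = #|cM D| * 2 ^ j &
   ((exists x y z, Af (cadd D) (cth D) x y z) -> exists x y z, Af (cadd D') (cth D') x y z)].
Proof.
elim: j => [|j [D' [HV HM HW]]]; first by exists D; rewrite !muln1.
exists (sumD D' boolD); split.
- by rewrite sum_cardV HV (card_bool : #|cV boolD| = 2) expnS -mulnA (mulnC (2 ^ j)).
- by rewrite sum_cardM HM boolD_cardM expnS -mulnA (mulnC (2 ^ j)).
- by move=> /HW; exact: sum_wit.
Qed.

Lemma d3_data d : 3 <= d -> exists D : cdata,
  [/\ #|cV D| = 2 ^ d, #|cM D| = 1 & exists x y z, Af (cadd D) (cth D) x y z].
Proof.
elim/ltn_ind: d => d IH Hd.
case: d IH Hd => [|[|[|[|[|[|d]]]]]] IH Hd //.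
- by exists D30; split; [exact: D30_V | exact: D30_M | exact: D30_W].
- by exists D40; split; [exact: D40_V | exact: D40_M | exact: D40_W].
- by exists D50; split; [exact: D50_V | exact: D50_M | exact: D50_W].
have H3 : d.+3 < d.+2.+4 by do 2!apply: leqW.
have [D [HV HM HW]] := IH d.+3 H3 isT.
exists (sumD D30 D); split.
- by rewrite sum_cardV D30_V HV -expnD.
- by rewrite sum_cardM D30_M HM.
- exact: sum_wit D30_W.
Qed.

Lemma exists_data k l : 0 < l -> l <= k -> (3 <= k - l \/ (1 <= k - l /\ 2 <= l)) ->
  exists D : cdata, [/\ #|cV D| = 2 ^ k.-1, #|cM D| = 2 ^ l.-1 &
    exists x y z, Af (cadd D) (cth D) x y z].
Proof.
move=> hl hlk H.
have [Hd|Hd3] := leqP 3 (k - l).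
- have [D [HV HM HW]] := d3_data Hd.
  have [D' [HV' HM' HW']] := ext_bool D l.-1.
  exists D'; split; last exact: HW'.
    rewrite HV' HV -expnD; congr (2 ^ _).
    move/leP: hl => hl'; move/leP: hlk => hlk'; rewrite -?plusE -?minusE; lia.
  by rewrite HM' HM mul1n.
- case: H => [|[Hd Hl]]; first by rewrite leqNgt Hd3.
  have [D0 [HV0 HM0 HW0]] : exists D0 : cdata, [/\ #|cV D0| = 2 ^ (k - l).+1, #|cM D0| = 2 &
      exists x y z, Af (cadd D0) (cth D0) x y z].
    case: (k - l) Hd Hd3 {hlk} => [|[|[|d]]] //= Hd.
    + by exists D21; split; [exact: D21_V | exact: D21_M | exact: D21_W].
    + by exists D31; split; [exact: D31_V | exact: D31_M | exact: D31_W].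
  have [D' [HV' HM' HW']] := ext_bool D0 (l - 2).
  exists D'; split; last exact: HW'.
    rewrite HV' HV0 -expnD; congr (2 ^ _).
    move/leP: Hl => hl'; move/leP: hlk => hlk'; rewrite -?plusE -?minusE; lia.
  rewrite HM' HM0 -expnS; congr (2 ^ _).
  move/leP: Hl => hl'; rewrite -?plusE -?minusE; lia.
Qed.

Lemma nuc_e (T : finType) (mul : T -> T -> T) e : is_loop mul e -> e \in middle_nucleus mul.
Proof.
move=> [H _]; rewrite inE; apply/forallP => x; apply/forallP => z.
by case: (H x) => _ ->; case: (H z) => ->.
Qed.

Lemma no_small (T : finType) (mul : T -> T -> T) e :
  is_Aloop mul e -> is_commutative mul -> #|middle_nucleus mul| = 2 ->
  #|T| = 4 \/ #|T| = 8 -> False.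
Proof.
move=> HA HC HN2 HT.
have He := nuc_e HA.1.
have : #|middle_nucleus mul :\ e| == 1 by move: HN2; rewrite (cardsD1 e) He add1n => /eqP; rewrite eqSS.
case/cards1P => n Hn1.
have : n \in middle_nucleus mul :\ e by rewrite Hn1 set11.
rewrite in_setD1 => /andP [Hne Hn].
have HN : forall y, y \in middle_nucleus mul -> y = e \/ y = n.
  move=> y Hy; case: (eqVneq y e) => [->|Hye]; first by left.
  right; have : y \in middle_nucleus mul :\ e by rewrite in_setD1 Hye.
  by rewrite Hn1 inE => /eqP.
case: HT => HT.
- exact: (no4 HA HC Hn Hne HN HT).
- exact: (no8 HA HC Hn Hne HN HT).
Qed.

Lemma noeq (T : finType) (mul : T -> T -> T) :
  #|middle_nucleus mul| = #|T| -> is_associative mul.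
Proof.
move=> H x y z.
have : middle_nucleus mul == setT by rewrite eqEcard subsetT cardsT H leqnn.
move/eqP => HN; have : y \in middle_nucleus mul by rewrite HN inE.
by rewrite inE => /forallP/(_ x)/forallP/(_ z)/eqP.
Qed.

Theorem lemma4p6 (k l : nat) (hl : 0 < l) (hlk : l <= k) :
  (exists (T : finType) (mul : T -> T -> T) (e : T),
      is_Aloop mul e /\ is_commutative mul /\ ~ is_associative mul /\
      #|T| = 2 ^ k /\ #|middle_nucleus mul| = 2 ^ l)
  <-> (3 <= k - l \/ (1 <= k - l /\ 2 <= l)).
Proof.
split.
- move=> [T [mul [e [HA [HC [Hna [HT HN]]]]]]].
  have Hkl : k <> l.
    by move=> E; apply: Hna; apply: noeq; rewrite HN HT E.
  case: (leqP 3 (k - l)) => Hd; first by left.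
  case: (ltnP 1 l) => Hl2.
    right; split => //; rewrite subn_gt0 ltn_neqAle hlk andbT.
    by apply/eqP => E; apply: Hkl.
  have El : l = 1 by apply/eqP; rewrite eqn_leq Hl2 hl.
  subst l; exfalso.
  case: k hlk Hd Hkl HT => [|[|[|[|k]]]] // _ _ Hkl HT.
  + by apply: (no_small HA HC HN); left.
  + by apply: (no_small HA HC HN); right.
- move=> H.
  have [D [HV HM HW]] := exists_data hl hlk H.
  apply: (loop_of_data (D := D)) HV HM HW.
  + exact: leq_trans hl hlk.
  + exact: hl.
Qed.
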